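(* In any quiver, every normal vertex of finite height is phylogenetic.
   Context: A quiver consists of a class of vertices and, for each ordered pair of vertices $(A,B)$, a set of edges $A\to B$ (loops and multiple edges allowed). An evolution of length $m\ge 0$ is a sequence $A_0\leftarrow A_1\leftarrow\cdots\leftarrow A_m$ of vertices together with edges $A_k\to A_{k-1}$ ($1\le k\le m$); $A_0$ is its initial and $A_m$ its terminal vertex. Write $A\le B$ ($A$ is an ancestor of $B$) if there is an evolution with initial vertex $A$ and terminal vertex $B$; $A,B$ are isotypic ($A\sim B$) if $A\le B$ and $B\le A$. A vertex $A$ is primitive if every ancestor of $A$ is isotypic to $A$. A full evolution for $X$ is an evolution with primitive initial vertex and terminal vertex $X$. The height $h(X)$ is the smallest length of a full evolution for $X$ ($\infty$ if none). A vertex $A_k$ ($0\le k<m$) of an evolution $A_0\leftarrow\cdots\leftarrow A_m$ is critical if $h(A_k)<\infty$ and $h(A_{k+1})=h(A_k)+1$. The critical ancestors of a vertex $B$ are the critical vertices of full evolutions terminating at $B$. $B$ is normal if any two critical ancestors of $B$ of equal height are isotypic. An evolution $\alpha=(A_0\leftarrow\cdots\leftarrow A_m)$ embeds in $\beta=(B_0\leftarrow\cdots\leftarrow B_n)$ if $m\le n$ and there are $0\le r_0<\cdots<r_m\le n$ with $A_k\sim B_{r_k}$. A universal evolution for $X$ is a full evolution for $X$ embedding in every full evolution for $X$; $X$ is phylogenetic if one exists. *)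

(* Defs.v *)
From Stdlib Require Import Arith List.
Import ListNotations.
Set Implicit Arguments.

Section Quiver.
Variable V : Type.
Variable E : V -> V -> Type.

(* evol X = evolutions A_0 <- A_1 <- ... <- A_m with terminal vertex A_m = X.
   evS e B f extends an evolution e with terminal vertex A by a new terminal
   vertex B together with an edge f : B -> A. *)
Inductive evol : V -> Type :=
| ev0 : forall A : V, evol A
| evS : forall (A : V) (e : evol A) (B : V), E B A -> evol B.
Arguments evS {A} e B _.

Fixpoint len (X : V) (e : evol X) : nat :=
  match e with
  | ev0 _ => 0
  | evS e _ _ => S (len e)
  end.

Fixpoint verts (X : V) (e : evol X) : list V :=
  match e with
  | ev0 A => [A]
  | evS e B _ => verts e ++ [B]
  end.

Fixpoint initial (X : V) (e : evol X) : V :=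
  match e with
  | ev0 A => A
  | evS e _ _ => initial e
  end.

(* the k-th vertex A_k (meaningful for k <= len e) *)
Definition vtx (X : V) (e : evol X) (k : nat) : V := nth k (verts e) X.

Definition ancestor (A B : V) : Prop := exists e : evol B, initial e = A.

Definition isotypic (A B : V) : Prop := ancestor A B /\ ancestor B A.

Definition primitive (A : V) : Prop := forall B, ancestor B A -> isotypic B A.

Definition full (X : V) (e : evol X) : Prop := primitive (initial e).

Definition is_height (X : V) (n : nat) : Prop :=
  (exists e : evol X, full e /\ len e = n) /\
  (forall e : evol X, full e -> n <= len e).

Definition finite_height (X : V) : Prop := exists n, is_height X n.

Definition critical_at (X : V) (e : evol X) (k : nat) : Prop :=
  k < len e /\ exists n, is_height (vtx e k) n /\ is_height (vtx e (S k)) (S n).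

Definition critical_ancestor (C B : V) : Prop :=
  exists (e : evol B) (k : nat), full e /\ critical_at e k /\ vtx e k = C.

Definition normal (B : V) : Prop :=
  forall C D n, critical_ancestor C B -> critical_ancestor D B ->
    is_height C n -> is_height D n -> isotypic C D.

Definition embeds (X Y : V) (a : evol X) (b : evol Y) : Prop :=
  len a <= len b /\
  exists r : nat -> nat,
    (forall k, k < len a -> r k < r (S k)) /\ r (len a) <= len b /\
    (forall k, k <= len a -> isotypic (vtx a k) (vtx b (r k))).

Definition universal (X : V) (a : evol X) : Prop :=
  full a /\ forall b : evol X, full b -> embeds a b.

Definition phylogenetic (X : V) : Prop := exists a : evol X, universal a.

End Quiver.

(* Main.v *)
Require Import Defs.
From Stdlib Require Import Arith List Lia Classical ClassicalEpsilon.
Import ListNotations.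

Lemma verts_len {V : Type} {E : V -> V -> Type} {X : V} (e : evol E X) :
  length (verts e) = S (len e).
Proof.
  induction e; simpl; auto. rewrite length_app, IHe; simpl; lia.
Qed.

Lemma vtx_last {V : Type} {E : V -> V -> Type} {X : V} (e : evol E X) :
  vtx e (len e) = X.
Proof.
  destruct e; unfold vtx; simpl; auto.
  rewrite app_nth2; rewrite verts_len; try lia.
  replace (S (len e) - S (len e)) with 0 by lia. reflexivity.
Qed.

Lemma vtx_evS {V : Type} {E : V -> V -> Type} {A : V} (e : evol E A) B (f : E B A) k :
  k <= len e -> vtx (evS e B f) k = vtx e k.
Proof.
  intros Hk. unfold vtx; simpl.
  rewrite app_nth1 by (rewrite verts_len; lia).
  apply nth_indep. rewrite verts_len; lia.
Qed.

Lemma vtx_0 {V : Type} {E : V -> V -> Type} {X : V} (e : evol E X) :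
  vtx e 0 = initial e.
Proof.
  induction e; simpl. reflexivity.
  rewrite vtx_evS by lia. exact IHe.
Qed.

Lemma segment {V : Type} {E : V -> V -> Type} {X : V} (e : evol E X) :
  forall j k, j <= k -> k <= len e -> forall Y, vtx e k = Y ->
  exists s : evol E Y, initial s = vtx e j /\ len s = k - j.
Proof.
  induction e as [A|A e IH B f]; intros j k Hjk Hk Y0 HY.
  - simpl in Hk. assert (j = 0) by lia. assert (k = 0) by lia. subst.
    unfold vtx in *; simpl in *. subst. exists (ev0 E _). simpl. auto.
  - simpl in Hk.
    destruct (Nat.le_gt_cases k (len e)) as [Hk'|Hk'].
    + rewrite vtx_evS in HY by lia. rewrite vtx_evS by lia. eauto.
    + assert (k = S (len e)) by lia. subst k.
      pose proof (vtx_last (evS e B f)) as HL. simpl in HL. rewrite HL in HY. subst Y0.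
      destruct (Nat.eq_dec j (S (len e))) as [->|Hj].
      * exists (ev0 E B). simpl. rewrite HL. split; auto. lia.
      * destruct (IH j (len e) ltac:(lia) ltac:(lia) A (vtx_last e)) as [s [Hs1 Hs2]].
        exists (evS s B f). split; [rewrite vtx_evS by lia; exact Hs1 |]. cbn [len]; rewrite Hs2; lia.
Qed.

Lemma graft {V : Type} {E : V -> V -> Type} {X : V} (s : evol E X) :
  forall A (p : evol E A), initial s = A ->
  exists q : evol E X, initial q = initial p /\ len q = len p + len s.
Proof.
  induction s as [B|A' s IH B f]; intros A p H; simpl in *.
  - subst. exists p. split; auto; lia.
  - destruct (IH A p H) as [q [Hq1 Hq2]]. exists (evS q B f). simpl. split; auto. lia.
Qed.

Lemma height_unique {V : Type} {E : V -> V -> Type} {Y : V} a b :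
  is_height E Y a -> is_height E Y b -> a = b.
Proof.
  intros [[ea [Fa La]] Ma] [[eb [Fb Lb]] Mb].
  specialize (Ma eb Fb). specialize (Mb ea Fa). lia.
Qed.

Lemma least_exists (P : nat -> Prop) :
  (exists n, P n) -> exists n, P n /\ forall m, P m -> n <= m.
Proof.
  intros [n Hn]. revert Hn. induction n as [n IH] using lt_wf_ind. intros Hn.
  destruct (classic (exists m, m < n /\ P m)) as [[m [Hm Pm]]|Hno].
  - exact (IH m Hm Pm).
  - exists n. split; auto. intros m Pm.
    destruct (Nat.le_gt_cases n m); auto. exfalso; apply Hno; eauto.
Qed.

Lemma full_vtx_height {V : Type} {E : V -> V -> Type} {X : V} (e : evol E X) j :
  full e -> j <= len e -> exists h, is_height E (vtx e j) h /\ h <= j.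
Proof.
  intros F Hj.
  destruct (segment e 0 j ltac:(lia) Hj _ eq_refl) as [s [Hs1 Hs2]].
  destruct (least_exists (fun h => exists p : evol E (vtx e j), full p /\ len p = h))
    as [h [[p [Fp Lp]] Mh]].
  { exists (len s). exists s. split; auto. unfold full in *. rewrite Hs1, vtx_0. exact F. }
  exists h. split.
  - split. eauto. intros q Fq. apply Mh. eauto.
  - rewrite Nat.sub_0_r in Hs2. rewrite <- Hs2. apply Mh. exists s. split; auto.
    unfold full in *. rewrite Hs1, vtx_0. exact F.
Qed.

Lemma height_step {V : Type} {E : V -> V -> Type} {X : V} (e : evol E X) j a b :
  j < len e -> is_height E (vtx e j) a -> is_height E (vtx e (S j)) b -> b <= S a.
Proof.
  intros Hj [[p [Fp Lp]] _] [_ Mb].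
  destruct (segment e j (S j) ltac:(lia) ltac:(lia) _ eq_refl) as [s [Hs1 Hs2]].
  destruct (graft s _ p Hs1) as [q [Hq1 Hq2]].
  assert (Hf : full q) by (unfold full in *; rewrite Hq1; exact Fp).
  specialize (Mb q Hf). lia.
Qed.

Fixpoint lst (f : nat -> nat) (k j : nat) : nat :=
  match j with
  | 0 => 0
  | S j' => if f (S j') <=? k then S j' else lst f k j'
  end.

Lemma lst_spec (f : nat -> nat) k : f 0 <= k -> forall j,
  lst f k j <= j /\ f (lst f k j) <= k /\ (forall i, i <= j -> f i <= k -> i <= lst f k j).
Proof.
  intros H0. induction j as [|j IH]; simpl.
  - split; [lia|]. split; auto.
  - destruct (Nat.leb_spec (f (S j)) k) as [Hl|Hl].
    + split; [lia|]. split; auto.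
    + destruct IH as [I1 [I2 I3]]. split; [lia|]. split; auto.
      intros i Hi Hfi. destruct (Nat.eq_dec i (S j)) as [->|Hne]; [lia|].
      apply I3; auto; lia.
Qed.

Theorem theorem5p1 (V : Type) (E : V -> V -> Type) (X : V) :
  normal E X -> finite_height E X -> phylogenetic E X.
Proof.
  intros Hnorm [n Hn].
  pose proof Hn as [[al [Fal Lal]] Mal].
  assert (Ah : forall k, k <= n -> is_height E (vtx al k) k).
  { intros k Hk.
    destruct (full_vtx_height al k Fal ltac:(lia)) as [h [Hh Hle]].
    destruct (Nat.eq_dec h k) as [->|Hne]; auto.
    exfalso. destruct Hh as [[p [Fp Lp]] _].
    destruct (segment al k n ltac:(lia) ltac:(lia) X) as [s [Hs1 Hs2]].
    { rewrite <- Lal. apply vtx_last. }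
    destruct (graft s _ p Hs1) as [q [Hq1 Hq2]].
    assert (Hf : full q) by (unfold full in *; rewrite Hq1; exact Fp).
    specialize (Mal q Hf). lia. }
  exists al. split; [exact Fal|].
  intros be Fbe. set (m := len be).
  set (hf := fun j => epsilon (inhabits 0) (fun h => is_height E (vtx be j) h)).
  assert (Hhf : forall j, j <= m -> is_height E (vtx be j) (hf j)).
  { intros j Hj. unfold hf. apply epsilon_spec.
    destruct (full_vtx_height be j Fbe Hj) as [h [Hh _]]. eauto. }
  assert (Hhf_le : forall j, j <= m -> hf j <= j).
  { intros j Hj. destruct (full_vtx_height be j Fbe Hj) as [h [Hh Hle]].
    rewrite (height_unique _ _ (Hhf j Hj) Hh). exact Hle. }
  assert (H0 : hf 0 = 0) by (pose proof (Hhf_le 0 ltac:(lia)); lia).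
  assert (Hm : hf m = n).
  { apply (height_unique _ _ (Hhf m ltac:(lia))). unfold m. rewrite vtx_last. exact Hn. }
  assert (Hstep : forall j, j < m -> hf (S j) <= S (hf j)).
  { intros j Hj. apply (height_step be j); auto; apply Hhf; lia. }
  assert (nm : n <= m) by (apply Mal; exact Fbe).
  set (r := fun k => lst hf k m).
  assert (Rs : forall k, r k <= m /\ hf (r k) <= k /\
                 (forall i, i <= m -> hf i <= k -> i <= r k)).
  { intros k. apply lst_spec. lia. }
  assert (Rcrit : forall k, k < n -> r k < m /\ hf (r k) = k /\ hf (S (r k)) = S k).
  { intros k Hk. destruct (Rs k) as [R1 [R2 R3]].
    assert (Rlt : r k < m).
    { destruct (Nat.eq_dec (r k) m) as [He|He]; [|lia]. rewrite He in R2. lia. }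
    assert (Hgt : k < hf (S (r k))).
    { destruct (Nat.le_gt_cases (hf (S (r k))) k) as [Hc|Hc]; auto.
      specialize (R3 (S (r k)) ltac:(lia) Hc). lia. }
    pose proof (Hstep (r k) Rlt). split; auto. split; lia. }
  split; [lia|].
  exists r. split; [|split].
  - intros k Hk. rewrite Lal in Hk. destruct (Rcrit k Hk) as [C1 [C2 C3]].
    destruct (Rs (S k)) as [_ [_ R3]]. apply R3; lia.
  - rewrite Lal. apply Rs.
  - intros k Hk. rewrite Lal in Hk.
    destruct (Nat.eq_dec k n) as [->|Hne].
    + assert (r n = m).
      { destruct (Rs n) as [R1 [_ R3]]. specialize (R3 m ltac:(lia) ltac:(lia)). lia. }
      rewrite H. unfold m. rewrite <- Lal at 1. rewrite !vtx_last.
      split; exists (ev0 E X); reflexivity.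
    + destruct (Rcrit k ltac:(lia)) as [C1 [C2 C3]].
      apply (Hnorm _ _ k).
      * exists al, k. split; [exact Fal|]. split; [|reflexivity].
        split; [rewrite Lal; lia|]. exists k. split; apply Ah; lia.
      * exists be, (r k). split; [exact Fbe|]. split; [|reflexivity].
        split; [exact C1|]. exists k. split.
        -- pose proof (Hhf (r k) ltac:(lia)) as HH; rewrite C2 in HH; exact HH.
        -- pose proof (Hhf (S (r k)) ltac:(lia)) as HH; rewrite C3 in HH; exact HH.
      * apply Ah; lia.
      * pose proof (Hhf (r k) ltac:(lia)) as HH; rewrite C2 in HH; exact HH.
Qed.
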